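(* Let $l$, $m$, $n$ be positive integers such that $1<l<m\le n$. Then \[ \sum_{d=1}^n \mu(d)\, 2^{\lfloor\frac{n}{d} \rfloor - \lfloor \frac{n-1}{d} \rfloor + \lfloor\frac{m}{d} \rfloor - \lfloor \frac{m-1}{d} \rfloor + \lfloor\frac{l}{d} \rfloor - \lfloor \frac{l-1}{d} \rfloor} \] equals \[ \begin{cases} 4+ M(n) & \text{if } \gcd(l,m)=\gcd(l,n)=\gcd(m,n) =1, \\ 3+ M(n) & \text{if exactly two of the pairs } \{l,m\},\{l,n\},\{m,n\} \text{ are co-prime},\\ 2+ M(n) & \text{if exactly one of these pairs is co-prime},\\ 1 + M(n) & \text{if none of these pairs is co-prime and } \gcd(l,m,n)=1, \\ M(n) & \text{otherwise.} \end{cases} \]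
   Context: $\mu$ is the Möbius function and $M(n)=\sum_{d=1}^n\mu(d)$ is the Mertens function. $\lfloor x\rfloor$ is the floor of $x$. *)

(* Defs.v *)
From mathcomp Require Import all_boot all_order all_algebra.
Set Implicit Arguments. Unset Strict Implicit. Unset Printing Implicit Defensive.
Import Order.TTheory GRing.Theory Num.Theory.
Local Open Scope ring_scope.

Definition mobius (d : nat) : int :=
  if (d == 0)%N then 0
  else if has (fun p => (p * p %| d)%N) (primes d) then 0
  else (-1) ^+ size (primes d).

Definition mertens (n : nat) : int := \sum_(1 <= d < n.+1) mobius d.

(* Main.v *)
Require Import Defs.
From mathcomp Require Import all_boot all_order all_algebra zify ring.
Import Order.TTheory GRing.Theory Num.Theory.
Local Open Scope ring_scope.

Lemma reidx (F : nat -> int) p N : (0 < p)%N ->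
  \sum_(0 <= d < p * N | (p %| d)%N) F d = \sum_(0 <= e < N) F (p * e).
Proof.
move=> p0; elim: N => [|N IH]; first by rewrite muln0 !big_geq.
rewrite (big_cat_nat _ (n:=p*N)) ?leq_pmul2l //= IH big_nat_recr //=.
congr (_ + _).

have hh : (p * N < p * N + p)%N by rewrite -[X in (X < _)%N]addn0 ltn_add2l.
rewrite mulnS addnC big_ltn_cond //=. rewrite (dvdn_mulr _ (dvdnn p)) big_nat_cond big1 ?addr0 //.
move=> d /andP[/andP[h1 h2] /dvdnP[k hk]]; exfalso.
rewrite hk in h1 h2.
have a : (N < k)%N by rewrite -(ltn_pmul2r p0) mulnC.
have b : (k < N.+1)%N by rewrite -(ltn_pmul2r p0) mulSn; lia.
lia.
Qed.

Lemma mob_sq p d : prime p -> (p * p %| d)%N -> mobius d = 0.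
Proof.
move=> pp h; rewrite /mobius; case: eqP => // /eqP d0.
suff -> : has (fun p => (p * p %| d)%N) (primes d) by [].
apply/hasP; exists p => //; rewrite mem_primes pp lt0n d0 /=.
exact: dvdn_trans (dvdn_mulr _ _) h.
Qed.

Lemma mob_mulp p d : prime p -> ~~ (p %| d)%N -> (0 < d)%N -> mobius (p * d) = - mobius d.
Proof.
move=> pp npd d0.
have p0 := prime_gt0 pp.
have pd0 : (p * d != 0)%N by rewrite muln_eq0 negb_or -!lt0n p0 d0.
have d0' : (d != 0)%N by rewrite -lt0n.
have mem : primes (p * d) =i p :: primes d.
  by move=> q; rewrite primesM // (primes_prime pp) !in_cons in_nil orbF.
have pnin : p \notin primes d by rewrite mem_primes pp d0.
rewrite /mobius (negbTE pd0) (negbTE d0') (eq_has_r mem) /=.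
have -> : (p * p %| p * d)%N = false by rewrite dvdn_pmul2l // (negbTE npd).
rewrite /=.
have -> : has (fun q => (q * q %| p * d)%N) (primes d) = has (fun q => (q * q %| d)%N) (primes d).
  apply: eq_in_has => q; rewrite mem_primes => /and3P[pq _ qd].
  have cq : coprime (q * q) p.
    rewrite coprimeMl andbb prime_coprime // dvdn_prime2 //.
    by apply/eqP => eqp; move: npd; rewrite -eqp qd.
  by rewrite Gauss_dvdr.
case: has => //.
rewrite (perm_size (uniq_perm (primes_uniq _) _ mem)) /= ?exprS ?mulN1r //.
by rewrite pnin primes_uniq.
Qed.

Definition fg g d : int := mobius d * (d %| g)%N%:R.

Lemma fg_big g d : (0 < g)%N -> (g < d)%N -> fg g d = 0.
Proof.
move=> g0 gd; rewrite /fg.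
suff -> : (d %| g)%N = false by rewrite mulr0.
by apply/negP => /(dvdn_leq g0); rewrite leqNgt gd.
Qed.

Lemma fg_ext g M : (0 < g)%N -> (g < M)%N ->
  \sum_(0 <= d < M) fg g d = \sum_(0 <= d < g.+1) fg g d.
Proof.
move=> g0 gM; rewrite (big_cat_nat _ (n:=g.+1)) //=.
rewrite [X in _ + X = _]big_nat_cond [X in _ + X = _]big1 ?addr0 //.
move=> d /andP[/andP[h1 _] _]; exact: fg_big.
Qed.

Lemma fg_extP g M (P : pred nat) : (0 < g)%N -> (g < M)%N ->
  \sum_(0 <= d < M | P d) fg g d = \sum_(0 <= d < g.+1 | P d) fg g d.
Proof.
move=> g0 gM; rewrite (big_cat_nat _ (n:=g.+1)) //=.
rewrite [X in _ + X = _]big_nat_cond [X in _ + X = _]big1 ?addr0 //.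
move=> d /andP[/andP[h1 _] _]; exact: fg_big.
Qed.

Lemma mob1 : mobius 1 = 1.
Proof. by rewrite /mobius /=. Qed.

Lemma mob_sum0 g : (0 < g)%N -> \sum_(0 <= d < g.+1) fg g d = (g == 1)%N%:R.
Proof.
move=> g0.
have [->|g1] := eqVneq g 1%N.
  rewrite big_nat_recl // big_nat_recl // big_geq // /fg mob1 /mobius /=.
have g2 : (1 < g)%N by lia.
set p := pdiv g.
have pp : prime p := pdiv_prime g2.
have p0 := prime_gt0 pp.
have pg : (p %| g)%N := pdiv_dvd g.
have big : (g < p * g.+1)%N.
  by rewrite -[X in (X < _)%N]mul1n ltn_mul // prime_gt1.
rewrite -(@fg_ext g (p * g.+1)) // (bigID (fun d => p %| d)%N) /= reidx //.
rewrite (@fg_extP g (p * g.+1) (fun d => ~~ (p %| d))%N) //.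
have -> : \sum_(0 <= i < g.+1) fg g (p * i) =
          \sum_(0 <= i < g.+1) (if ~~ (p %| i)%N then - fg g i else 0).
  apply: eq_bigr => e _.
  case: ifP => pe.
    have e0 : (0 < e)%N by case: e pe => //; rewrite dvdn0.
    rewrite /fg mob_mulp // Gauss_dvd ?prime_coprime // pg /= mulNr //.
  by rewrite /fg (@mob_sq p (p * e) pp) ?mul0r // dvdn_pmul2l // (negbFE pe).
by rewrite -big_mkcond sumrN addrC subrr.
Qed.

Lemma fg_sum1 g n : (0 < g)%N -> (g <= n)%N ->
  \sum_(1 <= d < n.+1) fg g d = (g == 1)%N%:R.
Proof.
move=> g0 gn.
have := @fg_ext g n.+1 g0 (leq_ltn_trans gn (ltnSn n)).
rewrite big_ltn // {1}/fg /mobius /= mul0r add0r => ->.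
exact: mob_sum0.
Qed.

Lemma divdiff k d : (0 < d)%N -> (0 < k)%N -> (k %/ d - (k - 1) %/ d)%N = (d %| k)%N.
Proof.
move=> d0; case: k => // k _; rewrite subn1 /= divnS //; lia.
Qed.

Lemma term (l m n d : nat) : (0 < d)%N -> (0 < l)%N -> (0 < m)%N -> (0 < n)%N ->
  mobius d * 2 ^+ ((n %/ d - (n - 1) %/ d) + (m %/ d - (m - 1) %/ d)
                       + (l %/ d - (l - 1) %/ d))%N
  = mobius d + fg n d + fg m d + fg l d + fg (gcdn l m) d + fg (gcdn l n) d
    + fg (gcdn m n) d + fg (gcdn (gcdn l m) n) d.
Proof.
move=> d0 l0 m0 n0; rewrite !divdiff // /fg !dvdn_gcd.
case: (d %| l)%N; case: (d %| m)%N; case: (d %| n)%N => /=; ring.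
Qed.

Theorem theorem4p2 (l m n : nat) (hl : (1 < l)%N) (hlm : (l < m)%N) (hmn : (m <= n)%N) :
  \sum_(1 <= d < n.+1)
      mobius d * 2 ^+ ((n %/ d - (n - 1) %/ d) + (m %/ d - (m - 1) %/ d)
                       + (l %/ d - (l - 1) %/ d))%N
  = (let c := (coprime l m + coprime l n + coprime m n)%N in
     if (c == 3)%N then 4 + mertens n
     else if (c == 2)%N then 3 + mertens n
     else if (c == 1)%N then 2 + mertens n
     else if gcdn (gcdn l m) n == 1%N then 1 + mertens n
     else mertens n).
Proof.
have l0 : (0 < l)%N by lia.
have m0 : (0 < m)%N by lia.
have n0 : (0 < n)%N by lia.
rewrite big_nat_cond (eq_bigr (fun d => mobius d + fg n d + fg m d + fg l d + fg (gcdn l m) d + fg (gcdn l n) d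
    + fg (gcdn m n) d + fg (gcdn (gcdn l m) n) d)); last first.
  by move=> d /andP[/andP[d0 _] _]; rewrite term.
rewrite -big_nat_cond !big_split /=.
have gle a b : (0 < a)%N -> (a <= n)%N -> (gcdn a b <= n)%N.
  by move=> a0 an; apply: leq_trans an; apply: dvdn_leq => //; exact: dvdn_gcdl.
have glm : (0 < gcdn l m)%N by rewrite gcdn_gt0 l0.
rewrite !fg_sum1 ?gcdn_gt0 ?glm ?l0 ?m0 ?gle //; try lia.
have hn : (n == 1)%N = false by apply/negbTE; lia.
have hm : (m == 1)%N = false by apply/negbTE; lia.
have hl' : (l == 1)%N = false by apply/negbTE; lia.
rewrite hn hm hl' -!/(coprime _ _).
have h3 : coprime l m || coprime l n || coprime m n -> coprime (gcdn l m) n.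
  rewrite /coprime; case/orP => [/orP[]|] /eqP h.
  - by rewrite h gcd1n.
  - by rewrite gcdnAC h gcd1n.
  - by rewrite -gcdnA h gcdn1.
rewrite /mertens.
move: h3; case: (coprime l m); case: (coprime l n); case: (coprime m n) => /= h3;
  rewrite ?(h3 isT) /=; try (case: (coprime (gcdn l m) n) => /=); ring.
Qed.
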